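(* Assume the standing hypotheses, let $\sigma\in(0,1)$, $C_1>0$, $\gamma\in[0,2)$ and $C_8>0$. Then there exist $\rho>0$ and $\bar\mu\in(0,\hat\mu]$ such that the following holds for all $\mu\in(0,\bar\mu]$ and all $(x,\lambda)\in\mathcal B((x^*,\lambda^* ),\delta)$ with $x>0,\lambda>0$, $\|(x,\lambda)-(x^\mu,\lambda^\mu)\|<\rho$, $\|F_\mu(x,\lambda)\|\le C_1\mu$ and $\|(\Delta x_{\mathcal A}^N,\Delta\lambda_{\mathcal I}^N)\|\ge C_8\mu^\gamma$, where $(\Delta x^N,\Delta\lambda^N)$ is the Newton direction for $\mu^+=\sigma\mu$. Define $(\Delta x,\Delta\lambda)$ by: for $i\in\mathcal A$, $\Delta x_i\in\{\Delta x_i^S,\Delta x_i^C\}$ (chosen arbitrarily per index) and $\Delta\lambda_i=0$; for $i\in\mathcal I$, $\Delta x_i=0$ and $\Delta\lambda_i=\Delta\lambda_i^C$. With $(x_+^N,\lambda_+^N)=(x,\lambda)+(\Delta x^N,\Delta\lambda^N)$ and $(x_+,\lambda_+)=(x,\lambda)+(\Delta x,\Delta\lambda)$, $$\|(x_+^N,\lambda_+^N)-(x_+,\lambda_+)\|\le\|(x_+^N,\lambda_+^N)-(x,\lambda)\|.$$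
   Context: Problem: minimize $f(x)$ subject to $x\ge0$, $f:\mathbb R^n\to\mathbb R$ twice continuously differentiable with locally Lipschitz Hessian. Norms Euclidean; $e$ all-ones; $X=\mathrm{diag}(x)$, $\Lambda=\mathrm{diag}(\lambda)$; $F_\mu(x,\lambda)=\begin{bmatrix}\nabla f(x)-\lambda\\ \Lambda Xe-\mu e\end{bmatrix}$, $F'(x,\lambda)=\begin{bmatrix}\nabla^2f(x)&-I\\ \Lambda&X\end{bmatrix}$. The Newton direction for $\mu^+=\sigma\mu$ solves $F'(x,\lambda)(\Delta x^N,\Delta\lambda^N)=-F_{\mu^+}(x,\lambda)$. Approximations: $\Delta x_i^S=-\frac{x_i[\nabla f(x)]_i-\mu^+}{x_i[\nabla^2f(x)]_{ii}+\lambda_i}$, $\Delta x_i^C=-x_i+\mu^+/\lambda_i$, $\Delta\lambda_i^C=-\lambda_i+\mu^+/x_i$. Standing hypotheses: $(x^*,\lambda^* )$ satisfies $\nabla f(x^* )=\lambda^*$, $x^*\ge0$, $\lambda^*\ge0$, $x_i^*\lambda_i^*=0$, $x^*+\lambda^*>0$, $[\nabla^2f(x^* )]_{\mathcal I\mathcal I}\succ0$, where $\mathcal A=\{i:x^*_i=0\}$, $\mathcal I=\{i:x_i^*>0\}$; subscripts $\mathcal A,\mathcal I$ denote sub-vectors. $\delta>0$: $F'$ nonsingular on $\mathcal B((x^*,\lambda^* ),\delta)$ with $\|F'^{-1}\|\le M$; $\hat\mu>0$: for $\mu\in(0,\hat\mu]$ a Lipschitz barrier trajectory $(x^\mu,\lambda^\mu)\in\mathcal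 B((x^*,\lambda^* ),\delta)$ with $F_\mu(x^\mu,\lambda^\mu)=0$, $\|(x^\mu,\lambda^\mu)-(x^*,\lambda^* )\|\le C_4\mu$ exists. *)

(* Defs.v *)
From HB Require Import structures.
From mathcomp Require Import all_boot all_order all_algebra.
From mathcomp Require Import all_classical all_reals all_analysis.
Set Implicit Arguments. Unset Strict Implicit. Unset Printing Implicit Defensive.
Import Order.TTheory GRing.Theory Num.Theory.
Import numFieldNormedType.Exports.
Local Open Scope ring_scope.

Section Defs.
Variable R : realType.

Definition enorm m (v : 'cV[R]_m) : R := Num.sqrt (\sum_i (v i 0) ^+ 2).

Definition fnorm m k (A : 'M[R]_(m, k)) : R :=
  Num.sqrt (\sum_i \sum_j (A i j) ^+ 2).

Definition hadam n (l x : 'cV[R]_n) : 'cV[R]_n := \col_i (l i 0 * x i 0).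

Definition Fmu n (g : 'cV[R]_n -> 'cV[R]_n) (mu : R) (x l : 'cV[R]_n)
  : 'cV[R]_(n + n) :=
  col_mx (g x - l) (hadam l x - mu *: const_mx 1).

Definition Fprime n (H : 'cV[R]_n -> 'M[R]_n) (x l : 'cV[R]_n)
  : 'M[R]_(n + n) :=
  block_mx (H x) (- 1%:M) (diag_mx l^T) (diag_mx x^T).

Definition vpos n (v : 'cV[R]_n) := forall i, 0 < v i 0.
Definition vnneg n (v : 'cV[R]_n) := forall i, 0 <= v i 0.

Definition dxS n (g : 'cV[R]_n -> 'cV[R]_n) (H : 'cV[R]_n -> 'M[R]_n)
  (mup : R) (x l : 'cV[R]_n) (i : 'I_n) : R :=
  - ((x i 0 * g x i 0 - mup) / (x i 0 * H x i i + l i 0)).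
Definition dxC n (mup : R) (x l : 'cV[R]_n) (i : 'I_n) : R :=
  - x i 0 + mup / l i 0.
Definition dlC n (mup : R) (x l : 'cV[R]_n) (i : 'I_n) : R :=
  - l i 0 + mup / x i 0.

Definition active n (xs : 'cV[R]_n) (i : 'I_n) : bool := xs i 0 == 0.

Definition enorm_AI n (xs : 'cV[R]_n) (v w : 'cV[R]_n) : R :=
  Num.sqrt (\sum_(i | active xs i) (v i 0) ^+ 2
            + \sum_(i | ~~ active xs i) (w i 0) ^+ 2).

(* The combined step: for i in A, dx_i = dxS_i or dxC_i according to the
   arbitrary choice s i (true = S, false = C), dl_i = 0;
   for i in I, dx_i = 0, dl_i = dlC_i. *)
Definition comb_dx n (xs : 'cV[R]_n) (g : 'cV[R]_n -> 'cV[R]_n)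
  (H : 'cV[R]_n -> 'M[R]_n) (s : 'I_n -> bool) (mup : R) (x l : 'cV[R]_n)
  : 'cV[R]_n :=
  \col_i (if active xs i then (if s i then dxS g H mup x l i else dxC mup x l i)
          else 0).
Definition comb_dl n (xs : 'cV[R]_n) (mup : R) (x l : 'cV[R]_n) : 'cV[R]_n :=
  \col_i (if active xs i then 0 else dlC mup x l i).

End Defs.

(* Main.v *)
Require Import Defs.
From HB Require Import structures.
From mathcomp Require Import all_boot all_order all_algebra.
From mathcomp Require Import all_classical all_reals all_analysis.
From mathcomp Require Import ring lra.
Import Order.TTheory GRing.Theory Num.Theory.
Import numFieldNormedType.Exports.
Local Open Scope ring_scope.

Set Implicit Arguments. Unset Strict Implicit.
Section Helpers.
Variable R : realType.

Definition sq m (v : 'cV[R]_m) : R := \sum_i (v i 0) ^+ 2.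

Lemma enormE m (v : 'cV[R]_m) : enorm v = Num.sqrt (sq v).
Proof. by []. Qed.

Lemma sq_ge0 m (v : 'cV[R]_m) : 0 <= sq v.
Proof. by apply: sumr_ge0 => i _; rewrite sqr_ge0. Qed.

Lemma le_sum1 (I : finType) (F : I -> R) j :
  (forall i, 0 <= F i) -> F j <= \sum_i F i.
Proof.
move=> h; rewrite (bigD1 j) //= lerDl; apply: sumr_ge0 => i _; exact: h.
Qed.

Lemma sq_comp m (v : 'cV[R]_m) i : (v i 0) ^+ 2 <= sq v.
Proof. by apply: (@le_sum1 _ (fun k => v k 0 ^+ 2) i) => k; rewrite sqr_ge0. Qed.

Lemma enorm_ge0 m (v : 'cV[R]_m) : 0 <= enorm v.
Proof. exact: sqrtr_ge0. Qed.

Lemma comp_le m (v : 'cV[R]_m) i : `|v i 0| <= enorm v.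
Proof.
rewrite enormE -sqrtr_sqr ler_sqrt ?sq_ge0 //; exact: sq_comp.
Qed.

Lemma sq_col m k (a : 'cV[R]_m) (b : 'cV[R]_k) :
  sq (col_mx a b) = sq a + sq b.
Proof.
rewrite /sq big_split_ord /=; congr (_ + _); apply: eq_bigr => i _;
  by rewrite ?col_mxEu ?col_mxEd.
Qed.

Lemma enorm_le m (v : 'cV[R]_m) a : 0 <= a -> sq v <= a ^+ 2 -> enorm v <= a.
Proof.
move=> a0 h; rewrite enormE -(ger0_norm a0) -sqrtr_sqr ler_sqrt //.
exact: sqr_ge0.
Qed.

Lemma enorm_lt m (v : 'cV[R]_m) a : 0 <= a -> sq v < a ^+ 2 -> enorm v < a.
Proof.
move=> a0 h; have a2 : 0 < a ^+ 2 by apply: le_lt_trans h; exact: sq_ge0.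
rewrite enormE -(ger0_norm a0) -sqrtr_sqr ltr_sqrt //.
Qed.

Lemma sq_le m (v : 'cV[R]_m) a : enorm v <= a -> sq v <= a ^+ 2.
Proof.
move=> h; have a0 : 0 <= a by apply: le_trans h; exact: enorm_ge0.
rewrite -(sqr_sqrtr (sq_ge0 v)) -enormE.
rewrite ler_pXn2r // ?nnegrE //; exact: enorm_ge0.
Qed.

Lemma sq_lt m (v : 'cV[R]_m) a : enorm v < a -> sq v < a ^+ 2.
Proof.
move=> h; have a0 : 0 <= a by apply: le_trans (ltW h); exact: enorm_ge0.
rewrite -(sqr_sqrtr (sq_ge0 v)) -enormE.
rewrite ltr_pXn2r // ?nnegrE //; exact: enorm_ge0.
Qed.

Lemma sq_opp m (v : 'cV[R]_m) : sq (- v) = sq v.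
Proof. by apply: eq_bigr => i _; rewrite mxE sqrrN. Qed.

Lemma sq_add m (a b : 'cV[R]_m) : sq (a + b) <= 2 * sq a + 2 * sq b.
Proof.
rewrite /sq !mulr_sumr -big_split /=; apply: ler_sum => i _; rewrite mxE.
set u := a i 0; set w := b i 0.
have : 0 <= (u - w) ^+ 2 by exact: sqr_ge0.
by rewrite !expr2 => h; nra.
Qed.

Lemma sq_col_diff m k (a a' : 'cV[R]_m) (b b' : 'cV[R]_k) :
  sq (col_mx a b - col_mx a' b') =
  \sum_i (a i 0 - a' i 0) ^+ 2 + \sum_i (b i 0 - b' i 0) ^+ 2.
Proof.
rewrite opp_col_mx add_col_mx sq_col /sq.
by congr (_ + _); apply: eq_bigr => i _; rewrite !mxE.
Qed.

Lemma compU m (a a' b b' : 'cV[R]_m) i :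
  (col_mx a b - col_mx a' b') (lshift m i) 0 = a i 0 - a' i 0.
Proof. by rewrite opp_col_mx add_col_mx col_mxEu !mxE. Qed.

Lemma compD m (a a' b b' : 'cV[R]_m) i :
  (col_mx a b - col_mx a' b') (rshift m i) 0 = b i 0 - b' i 0.
Proof. by rewrite opp_col_mx add_col_mx col_mxEd !mxE. Qed.

Lemma sq_sub_col m (a a' b b' : 'cV[R]_m) :
  sq (a - a') <= sq (col_mx a b - col_mx a' b').
Proof.
rewrite opp_col_mx add_col_mx sq_col lerDl; exact: sq_ge0.
Qed.

Lemma fnorm_comp m k (A : 'M[R]_(m, k)) i j : `|A i j| <= fnorm A.
Proof.
rewrite /fnorm -sqrtr_sqr ler_sqrt; last first.
  by apply: sumr_ge0 => p _; apply: sumr_ge0 => q _; rewrite sqr_ge0.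
apply: le_trans (@le_sum1 _ (fun p => \sum_j0 A p j0 ^+ 2) i _); last first.
  by move=> p; apply: sumr_ge0 => q _; rewrite sqr_ge0.
by apply: (@le_sum1 _ (fun q => A i q ^+ 2) j) => q; rewrite sqr_ge0.
Qed.

Lemma exists_minpos m (a : 'I_m -> R) : (forall i, 0 < a i) ->
  exists c, 0 < c /\ forall i, c <= a i.
Proof.
move=> h; exists (\big[Order.min/1]_i a i); split.
  by apply: (big_ind (fun x => 0 < x)) => // x y hx hy; rewrite lt_min hx hy.
move=> i; rewrite (bigD1 i) //= ge_min lexx //.
Qed.

Lemma pos_min2 (a b : R) : 0 < a -> 0 < b -> exists c, [/\ 0 < c, c <= a & c <= b].
Proof.
move=> ha hb; exists (Order.min a b); rewrite lt_min ha hb ge_min lexx ge_min lexx orbT.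
by split.
Qed.


Lemma arithC (e x l d c C1 mu K1 : R) : 0 < c -> c / 2 <= x -> 0 <= l ->
  l * x <= (1 + C1) * mu -> `|d| <= K1 * mu -> x * e = - (l * d) ->
  0 < mu -> 0 <= C1 -> `|e| * c ^+ 2 <= 4 * (1 + C1) * K1 * mu ^+ 2.
Proof.
move=> c0 hx l0 hlx hd hxe mu0 C10.
have x0 : 0 < x by apply: lt_le_trans hx; rewrite divr_gt0.
have h1 : `|e| * x = l * `|d|.
  by rewrite mulrC -(ger0_norm (ltW x0)) -normrM hxe normrN normrM ger0_norm.
have he : 0 <= `|e| := normr_ge0 e.
have hd0 : 0 <= `|d| := normr_ge0 d.
have hc : c <= 2 * x by move: hx; rewrite ler_pdivrMr //; lra.
have h2 : `|e| * c ^+ 2 <= 2 * c * (l * `|d|).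
  rewrite -h1 expr2; have := ler_wpM2l (mulr_ge0 he (ltW c0)) hc; nra.
have h3 : l * c <= 2 * (1 + C1) * mu by nra.
have h4 : l * `|d| * c <= 2 * (1 + C1) * mu * `|d| by nra.
have h5 : 0 <= 2 * (1 + C1) * mu by nra.
have h6 : 2 * (1 + C1) * mu * `|d| <= 2 * (1 + C1) * mu * (K1 * mu).
  by apply: ler_wpM2l.
rewrite expr2; nra.
Qed.

Lemma arithS (e D xi Hii dd SH c C1 mu K1 B nn : R) : 0 < c -> c / 4 <= D ->
  D * e = xi * (Hii * dd - SH) -> 0 <= xi -> xi * c <= 2 * (1 + C1) * mu ->
  `|Hii| <= B -> `|dd| <= K1 * mu -> `|SH| <= nn * (B * (K1 * mu)) ->
  0 < mu -> 0 <= C1 -> 0 <= nn ->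
  `|e| * c ^+ 2 <= 8 * (1 + C1) * (nn + 1) * B * K1 * mu ^+ 2.
Proof.
move=> c0 hD hDe x0 hxc hH hd hS mu0 C10 nn0.
have D0 : 0 < D by apply: lt_le_trans hD; rewrite divr_gt0.
have he : 0 <= `|e| := normr_ge0 e.
have h1 : D * `|e| = xi * `|Hii * dd - SH|.
  by rewrite -(ger0_norm (ltW D0)) -normrM hDe normrM ger0_norm.
have h2 : `|Hii * dd - SH| <= B * (K1 * mu) + nn * (B * (K1 * mu)).
  apply: le_trans (ler_normB _ _) _; apply: lerD => //.
  rewrite normrM; apply: ler_pM => //; exact: normr_ge0.
have B0 : 0 <= B := le_trans (normr_ge0 _) hH.
have K0 : 0 <= K1 * mu := le_trans (normr_ge0 _) hd.
have hc : c <= 4 * D by move: hD; rewrite ler_pdivrMr //; lra.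
have h3 : `|e| * c <= 4 * (xi * `|Hii * dd - SH|) by rewrite -h1; nra.
have h4 : xi * `|Hii * dd - SH| <= xi * ((nn + 1) * (B * (K1 * mu))).
  by apply: ler_wpM2l => //; lra.
have h5 : `|e| * c ^+ 2 <= 4 * (xi * c) * ((nn + 1) * (B * (K1 * mu))).
  rewrite expr2; nra.
have h6 : 0 <= (nn + 1) * (B * (K1 * mu)) by apply: mulr_ge0; [lra| exact: mulr_ge0].
apply: le_trans h5 _.
have := ler_wpM2r h6 hxc; rewrite expr2; nra.
Qed.


Lemma arith_sig (a s m : R) : 0 < s -> s < 1 -> 0 < m ->
  (a - s * m) ^+ 2 <= 2 * (a - m) ^+ 2 + 2 * m ^+ 2.
Proof.
move=> s0 s1 m0.
have : 0 <= (a - m - (1 - s) * m) ^+ 2 by exact: sqr_ge0.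
have h : ((1 - s) * m) ^+ 2 <= m ^+ 2.
  rewrite ler_pXn2r ?nnegrE //; [nra | nra | lra].
rewrite !expr2 in h * => h'; nra.
Qed.

Lemma arith_F (p q q' C1 m : R) (k : nat) : p + q <= (C1 * m) ^+ 2 ->
  q' <= 2 * q + (2 * m ^+ 2) *+ k -> 0 <= p ->
  p + q' <= (2 * C1 ^+ 2 + 2 * k%:R) * m ^+ 2.
Proof. by rewrite exprMn -mulr_natr => h1 h2 h3; lra. Qed.


Lemma arithK_S (a nn B K1 m : R) : 0 <= a -> 0 <= nn -> 0 <= B -> 0 <= K1 ->
  8 * a * (nn + 1) * B * K1 * m ^+ 2 <= 16 * a * (nn + 1) * (B + 1) * K1 * m ^+ 2.
Proof.
move=> a0 n0 B0 K0.
have h : 0 <= a * (nn + 1) * K1 * m ^+ 2.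
  by apply: mulr_ge0; [apply: mulr_ge0; [apply: mulr_ge0 => //; lra|] | exact: sqr_ge0].
have -> : 8 * a * (nn + 1) * B * K1 * m ^+ 2 = (8 * B) * (a * (nn + 1) * K1 * m ^+ 2) by ring.
have -> : 16 * a * (nn + 1) * (B + 1) * K1 * m ^+ 2 = (16 * (B + 1)) * (a * (nn + 1) * K1 * m ^+ 2) by ring.
by apply: ler_wpM2r => //; lra.
Qed.

Lemma arithK_C (a nn B K1 m : R) : 0 <= a -> 0 <= nn -> 0 <= B -> 0 <= K1 ->
  4 * a * K1 * m ^+ 2 <= 16 * a * (nn + 1) * (B + 1) * K1 * m ^+ 2.
Proof.
move=> a0 n0 B0 K0.
have h : 0 <= a * K1 * m ^+ 2.
  by apply: mulr_ge0; [apply: mulr_ge0 => // | exact: sqr_ge0].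
have -> : 4 * a * K1 * m ^+ 2 = 4 * (a * K1 * m ^+ 2) by ring.
have -> : 16 * a * (nn + 1) * (B + 1) * K1 * m ^+ 2 = (16 * (nn + 1) * (B + 1)) * (a * K1 * m ^+ 2) by ring.
apply: ler_wpM2r => //.
have : 1 <= (nn + 1) * (B + 1) by nra.
lra.
Qed.

Lemma arithD (xi h li c B C1 mu : R) : 0 < c -> c / 2 <= li -> `|h| <= B -> 0 <= xi ->
  xi * c <= 2 * (1 + C1) * mu -> mu * (8 * (1 + C1) * (B + 1)) <= c ^+ 2 ->
  0 <= B -> 0 <= C1 -> 0 < mu -> c / 4 <= xi * h + li.
Proof.
move=> c0 hl hh x0 hx hm B0 C10 mu0.
have h1 : - B <= h by move: hh; rewrite ler_norml => /andP[].
have h2 : xi * B * c <= 2 * (1 + C1) * mu * B by apply: le_trans (_ : xi * c * B <= _); [rewrite mulrAC | apply: ler_wpM2r].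
have h3 : 2 * (1 + C1) * mu * B * 4 <= c ^+ 2.
  apply: le_trans hm; rewrite mulrC.
  have : 0 <= mu * (1 + C1) by nra.
  nra.
have h4 : xi * B * 4 <= c.
  have : xi * B * 4 * c <= c * c by rewrite expr2 in h3; nra.
  move=> h5; rewrite -(ler_pM2r c0); lra.
have : - (xi * B) <= xi * h.
  by rewrite -mulrN; apply: ler_wpM2l.
lra.
Qed.

Lemma arithXC (x l c C1 mu : R) : 0 < c -> 0 <= x -> c / 2 <= l -> l * x <= (1 + C1) * mu ->
  x * c <= 2 * (1 + C1) * mu.
Proof.
move=> c0 x0 hl hlx.
have : x * (c / 2) <= x * l by apply: ler_wpM2l.
have -> : x * (c / 2) = x * c / 2 by rewrite mulrA.
move=> h; have : x * c <= 2 * (x * l).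
  by move: h; rewrite ler_pdivrMr //; lra.
rewrite (mulrC x l); lra.
Qed.

Lemma arithCe (e d a b d' sm : R) : a != 0 -> e = d - (- b + sm / a) ->
  a * d + b * d' = - (a * b - sm) -> a * e = - (b * d').
Proof.
move=> a0 -> h.
have q : a * (sm / a) = sm by rewrite mulrC divfK.
rewrite mulrBr mulrDr q mulrN.
lra.
Qed.

Lemma arithDe (D e xi Hii dd SH dl gi li sm : R) : D = xi * Hii + li -> D != 0 ->
  e = dd - (- ((xi * gi - sm) / D)) -> SH - dl = - (gi - li) ->
  li * dd + xi * dl = - (li * xi - sm) -> D * e = xi * (Hii * dd - SH).
Proof.
move=> hD D0 -> h1 h2.
have q : D * ((xi * gi - sm) / D) = xi * gi - sm by rewrite mulrC divfK.
rewrite opprK mulrDr q.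
have -> : SH = dl - gi + li by lra.
rewrite hD.
have : xi * dl = - (li * xi - sm) - li * dd by lra.
move=> h3.
have -> : xi * (Hii * dd - (dl - gi + li)) = xi * Hii * dd - xi * dl + xi * gi - xi * li by ring.
rewrite h3.
ring.
Qed.


Lemma arithFin (q p sv C8 nn K : R) : 0 <= q -> q <= sv * p -> 0 <= p ->
  sv = C8 / (nn * K ^+ 2 + 1) -> 0 <= nn * K ^+ 2 -> 0 < C8 ->
  nn * (K * q) ^+ 2 <= (C8 * p) ^+ 2.
Proof.
move=> q0 hq p0 hsv hn C0.
have hd : 0 < nn * K ^+ 2 + 1 by lra.
have e : sv * (nn * K ^+ 2 + 1) = C8 by rewrite hsv divfK // gt_eqF.
have sv0 : 0 <= sv by rewrite hsv; apply: divr_ge0; lra.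
have h1 : q ^+ 2 <= (sv * p) ^+ 2 by rewrite ler_pXn2r // nnegrE; apply: mulr_ge0.
have h2 : nn * K ^+ 2 * sv ^+ 2 <= C8 ^+ 2.
  rewrite -e exprMn [X in _ <= X]mulrC ler_wpM2r ?sqr_ge0 //.
  rewrite expr2; nra.
have h3 := ler_wpM2l hn h1.
have h4 : nn * K ^+ 2 * (sv * p) ^+ 2 <= C8 ^+ 2 * p ^+ 2.
  by rewrite exprMn mulrA; apply: ler_wpM2r => //; exact: sqr_ge0.
rewrite !exprMn mulrA; exact: le_trans h3 h4.
Qed.


Lemma arithC4 (C4 mu a k : R) : 0 < mu -> 0 < k -> mu <= a / (k * (`|C4| + 1)) ->
  C4 * mu <= a / k.
Proof.
move=> mu0 k0; have n0 := normr_ge0 C4.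
have hk : 0 < k * (`|C4| + 1) by apply: mulr_gt0 => //; lra.
rewrite ler_pdivlMr // ler_pdivlMr // => h.
have mk : 0 <= mu * k by apply: mulr_ge0; apply: ltW.
have h2 := ler_wpM2r mk (real_ler_norm (num_real C4)).
have e1 : C4 * mu * k = C4 * (mu * k) by rewrite mulrA.
have e2 : mu * (k * (`|C4| + 1)) = `|C4| * (mu * k) + mu * k by ring.
rewrite e1; rewrite e2 in h; lra.
Qed.

Lemma arithLow (a b s0 rho t c : R) : `|a - b| < rho -> `|b - s0| <= t ->
  rho <= c / 4 -> t <= c / 4 -> c <= s0 -> c / 2 <= a.
Proof.
rewrite ltr_norml ler_norml => /andP[h1 h1'] /andP[h2 h2']; lra.
Qed.

Lemma arithFc (p mu C1 : R) : `|p - mu| <= C1 * mu -> p <= (1 + C1) * mu.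
Proof. rewrite ler_norml => /andP[_ h']; lra. Qed.

Lemma arith_xr (a b r rho t : R) : a < rho ^+ 2 -> b <= t ^+ 2 ->
  rho ^+ 2 <= (r / 2) ^+ 2 -> t ^+ 2 <= (r / 2) ^+ 2 -> 2 * a + 2 * b < r ^+ 2.
Proof.
move=> h1 h2 h3 h4.
have -> : r ^+ 2 = 2 * (r / 2) ^+ 2 + 2 * (r / 2) ^+ 2.
  by field.
lra.
Qed.

Lemma mu2E (mu gamma : R) : 0 < mu -> mu ^+ 2 = mu `^ gamma * mu `^ (2 - gamma).
Proof.
move=> mu0; rewrite -powRD; last by rewrite (lt0r_neq0 mu0) implybT.
by rewrite addrC subrK -powR_mulrn // ltW.
Qed.

End Helpers.

Unset Implicit Arguments. Set Strict Implicit.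

Theorem proposition3 (R : realType) (n : nat)
  (f : 'cV[R]_n -> R) (g : 'cV[R]_n -> 'cV[R]_n) (H : 'cV[R]_n -> 'M[R]_n)
  (* f is C^2 with gradient g and Hessian H; the Hessian is continuous and
     locally Lipschitz *)
  (hfd : forall x, differentiable f x)
  (hg : forall x v, 'd f x v = (v^T *m g x) 0 0)
  (hgd : forall x, differentiable g x)
  (hH : forall x v, 'd g x v = H x *m v)
  (hHc : continuous H)
  (hHlip : forall x0, exists r, exists L, 0 < r /\
      forall y z, enorm (y - x0) < r -> enorm (z - x0) < r ->
        fnorm (H y - H z) <= L * enorm (y - z))
  (* the KKT point *)
  (xs ls : 'cV[R]_n)
  (hKKT : g xs = ls) (hxs : vnneg xs) (hls : vnneg ls)
  (hcompl : forall i, xs i 0 * ls i 0 = 0)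
  (hstrict : vpos (xs + ls))
  (hpd : forall v : 'cV[R]_n, v != 0 -> (forall i, active xs i -> v i 0 = 0) ->
      0 < (v^T *m H xs *m v) 0 0)
  (* nonsingularity of F' on the ball with ||F'^{-1}|| <= M *)
  (delta M : R) (hdelta : 0 < delta)
  (hFp : forall x l, enorm (col_mx x l - col_mx xs ls) < delta ->
      Fprime H x l \in unitmx /\
      forall w, enorm (invmx (Fprime H x l) *m w) <= M * enorm w)
  (* the barrier trajectory *)
  (muhat C4 : R) (hmuhat : 0 < muhat)
  (xmu lmu : R -> 'cV[R]_n)
  (htrajlip : exists Lt, forall m1 m2, 0 < m1 <= muhat -> 0 < m2 <= muhat ->
      enorm (col_mx (xmu m1) (lmu m1) - col_mx (xmu m2) (lmu m2))
        <= Lt * `|m1 - m2|)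
  (htrajball : forall mu, 0 < mu <= muhat ->
      enorm (col_mx (xmu mu) (lmu mu) - col_mx xs ls) < delta)
  (htrajF : forall mu, 0 < mu <= muhat -> Fmu g mu (xmu mu) (lmu mu) = 0)
  (htrajC4 : forall mu, 0 < mu <= muhat ->
      enorm (col_mx (xmu mu) (lmu mu) - col_mx xs ls) <= C4 * mu)
  (* parameters of the proposition *)
  (sigma C1 gamma C8 : R)
  (hsigma : 0 < sigma < 1) (hC1 : 0 < C1) (hgamma : 0 <= gamma < 2)
  (hC8 : 0 < C8) :
  exists rho mubar, 0 < rho /\ 0 < mubar <= muhat /\
    forall mu, 0 < mu <= mubar ->
    forall x l : 'cV[R]_n,
      enorm (col_mx x l - col_mx xs ls) < delta ->
      vpos x -> vpos l ->
      enorm (col_mx x l - col_mx (xmu mu) (lmu mu)) < rho ->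
      enorm (Fmu g mu x l) <= C1 * mu ->
    forall dxN dlN : 'cV[R]_n,
      Fprime H x l *m col_mx dxN dlN = - Fmu g (sigma * mu) x l ->
      enorm_AI xs dxN dlN >= C8 * powR mu gamma ->
    forall s : 'I_n -> bool,
      let dx := comb_dx xs g H s (sigma * mu) x l in
      let dl := comb_dl xs (sigma * mu) x l in
      enorm (col_mx (x + dxN) (l + dlN) - col_mx (x + dx) (l + dl))
        <= enorm (col_mx (x + dxN) (l + dlN) - col_mx x l).
Proof.
have hs' : forall i, 0 < xs i 0 + ls i 0 by move=> i; have := hstrict i; rewrite mxE.
have [c [c0 hc]] := exists_minpos hs'.
have hA : forall i, active xs i -> xs i 0 = 0 /\ c <= ls i 0.
  move=> i /eqP h; split => //; by have := hc i; rewrite h add0r.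
have hI : forall i, ~~ active xs i -> ls i 0 = 0 /\ c <= xs i 0.
  move=> i /eqP h; have := hcompl i; move/eqP; rewrite mulf_eq0 (negbTE (introN eqP h)) /=.
  move/eqP => hl; split => //; by have := hc i; rewrite hl addr0.
have [r [L [r0 hL]]] := hHlip xs.
set B := fnorm (H xs) + `|L| * r.
have B0 : 0 <= B.
  apply: addr_ge0; last by apply: mulr_ge0 => //; exact: ltW.
  exact: sqrtr_ge0.
have hB : forall y, enorm (y - xs) < r -> forall i j, `|H y i j| <= B.
  move=> y hy i j.
  have e0 : enorm (xs - xs) < r.
    rewrite enormE (_ : sq _ = 0) ?sqrtr0 //.
    by rewrite /sq big1 // => k _; rewrite !mxE subrr expr0n.
  have h1 := hL y xs hy e0.
  have -> : H y i j = H xs i j + (H y - H xs) i j by rewrite !mxE addrCA subrr addr0.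
  apply: le_trans (ler_normD _ _) _; apply: lerD; first exact: fnorm_comp.
  apply: le_trans (fnorm_comp _ i j) _; apply: le_trans h1 _.
  apply: le_trans (ler_wpM2r (enorm_ge0 _) (real_ler_norm (num_real L))) _.
  by apply: ler_wpM2l => //; exact: ltW.
case/andP: hgamma => g0 g2; case/andP: hsigma => s0 s1.
set K0 := Num.sqrt (2 * C1 ^+ 2 + 2 * n%:R).
set K1 := `|M| * K0.
have K10 : 0 <= K1 by apply: mulr_ge0; [exact: normr_ge0 | exact: sqrtr_ge0].
set Kc := 16 * (1 + C1) * (n%:R + 1) * (B + 1) * K1.
set K := Kc / c ^+ 2.
have nK0 : 0 <= n%:R * K ^+ 2 by apply: mulr_ge0; [exact: ler0n | exact: sqr_ge0].
set sv := C8 / (n%:R * K ^+ 2 + 1).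
have sv0 : 0 < sv by apply: divr_gt0 => //; lra.
have a2p : 0 < c / (4 * (`|C4| + 1)).
  apply: divr_gt0 => //; have := normr_ge0 C4; lra.
have a3p : 0 < r / (2 * (`|C4| + 1)).
  apply: divr_gt0 => //; have := normr_ge0 C4; lra.
have a4p : 0 < c ^+ 2 / (8 * (1 + C1) * (B + 1)).
  apply: divr_gt0; first exact: exprn_gt0.
  apply: mulr_gt0; [apply: mulr_gt0; lra | lra].
have a5p : 0 < sv `^ (1 / (2 - gamma)) by apply: powR_gt0.
have [m1 [m10 m1a m1b]] := pos_min2 hmuhat a2p.
have [m2 [m20 m2a m2b]] := pos_min2 m10 a3p.
have [m3 [m30 m3a m3b]] := pos_min2 m20 a4p.
have [mubar [mb0 mba mbb]] := pos_min2 m30 a5p.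
have [rho [rho0 rhoa rhob]] := pos_min2 (divr_gt0 c0 (ltr0Sn _ 3)) (divr_gt0 r0 (ltr0Sn _ 1)).
exists rho, mubar; split => //; split; first by rewrite mb0 /=; lra.
move=> mu /andP[mu0 mum] x l hball xp lp hrho hF1 dxN dlN hN hAI s; cbv zeta.
set dx := comb_dx xs g H s (sigma * mu) x l; set dl := comb_dl xs (sigma * mu) x l.
have mu3 : mu <= m3 := le_trans mum mba.
have mu2 : mu <= m2 := le_trans mu3 m3a.
have mu1 : mu <= m1 := le_trans mu2 m2a.
have muh : 0 < mu <= muhat by rewrite mu0 /=; exact: le_trans mu1 m1a.
have hC4c : C4 * mu <= c / 4.
  by apply: arithC4 => //; exact: le_trans mu1 m1b.
have hC4r : C4 * mu <= r / 2.
  by apply: arithC4 => //; exact: le_trans mu2 m2b.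
have hmuS : mu * (8 * (1 + C1) * (B + 1)) <= c ^+ 2.
  have h8 : 0 < 8 * (1 + C1) * (B + 1).
    apply: mulr_gt0; first apply: mulr_gt0 => //.
      by apply: addr_gt0 => //; exact: ltr01.
    by apply: ltr_pwDr => //; exact: ltr01.
  by rewrite -ler_pdivlMr //; exact: le_trans mu3 m3b.
have hmug : mu `^ (2 - gamma) <= sv.
  have h1 : mu <= sv `^ (1 / (2 - gamma)) := le_trans mum mbb.
  have g2' : 0 <= 2 - gamma by rewrite subr_ge0; exact: ltW.
  have := @ge0_ler_powR R (2 - gamma) g2' mu (sv `^ (1 / (2 - gamma))).
  rewrite !nnegrE ltW // powR_ge0 => /(_ isT isT h1); rewrite -powRrM.
  have -> : 1 / (2 - gamma) * (2 - gamma) = 1.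
    by rewrite div1r mulVf // subr_eq0 gt_eqF.
  by rewrite powRr1 // ltW.
have hxm : forall i, `|x i 0 - xmu mu i 0| < rho /\ `|l i 0 - lmu mu i 0| < rho.
  move=> i; split.
    by have := comp_le (col_mx x l - col_mx (xmu mu) (lmu mu)) (lshift n i);
      rewrite compU => h; apply: le_lt_trans h hrho.
  by have := comp_le (col_mx x l - col_mx (xmu mu) (lmu mu)) (rshift n i);
    rewrite compD => h; apply: le_lt_trans h hrho.
have hC4 := htrajC4 mu muh.
have hxs' : forall i, `|xmu mu i 0 - xs i 0| <= C4 * mu /\ `|lmu mu i 0 - ls i 0| <= C4 * mu.
  move=> i; split.
    by have := comp_le (col_mx (xmu mu) (lmu mu) - col_mx xs ls) (lshift n i);
      rewrite compU => h; apply: le_trans h hC4.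
  by have := comp_le (col_mx (xmu mu) (lmu mu) - col_mx xs ls) (rshift n i);
    rewrite compD => h; apply: le_trans h hC4.
have hlowI : forall i, ~~ active xs i -> c / 2 <= x i 0.
  move=> i hi; have [_ hx] := hI i hi; have [h1 _] := hxm i; have [h2 _] := hxs' i.
  exact: arithLow h1 h2 rhoa hC4c hx.
have hlowA : forall i, active xs i -> c / 2 <= l i 0.
  move=> i hi; have [_ hx] := hA i hi; have [_ h1] := hxm i; have [_ h2] := hxs' i.
  exact: arithLow h1 h2 rhoa hC4c hx.
have hFc : forall i, l i 0 * x i 0 <= (1 + C1) * mu.
  move=> i; have := comp_le (Fmu g mu x l) (rshift n i).
  rewrite /Fmu col_mxEd !mxE mulr1 => h; apply: arithFc; exact: le_trans h hF1.
have hxr : enorm (x - xs) < r.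
  apply: enorm_lt; first exact: ltW.
  have e1 : x - xs = (x - xmu mu) + (xmu mu - xs) by rewrite addrA subrK.
  rewrite e1; apply: le_lt_trans (sq_add _ _) _.
  have h1 := le_lt_trans (sq_sub_col x (xmu mu) l (lmu mu)) (sq_lt hrho).
  have h2 := le_trans (sq_sub_col (xmu mu) xs (lmu mu) ls) (sq_le hC4).
  have C4p : 0 <= C4 * mu := le_trans (enorm_ge0 _) hC4.
  have r2 : 0 <= r / 2 by rewrite divr_ge0 // ltW.
  have h3 : rho ^+ 2 <= (r / 2) ^+ 2 by rewrite ler_pXn2r // ?nnegrE ltW.
  have h4 : (C4 * mu) ^+ 2 <= (r / 2) ^+ 2 by rewrite ler_pXn2r // ?nnegrE.
  exact: arith_xr h1 h2 h3 h4.
have hHx := hB x hxr.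
have [E1 E2] : (H x *m dxN + - 1%:M *m dlN = - (g x - l)) /\
   (diag_mx l^T *m dxN + diag_mx x^T *m dlN =
    - (hadam l x - (sigma * mu) *: const_mx 1)).
  by apply: eq_col_mx; rewrite -mul_block_col -opp_col_mx; exact: hN.
rewrite mulNmx mul1mx in E1.
have e1 : forall i, \sum_j H x i j * dxN j 0 - dlN i 0 = - (g x i 0 - l i 0).
  by move=> i; have := congr1 (fun A : 'cV[R]_n => A i 0) E1; rewrite !mxE.
have e2 : forall i, l i 0 * dxN i 0 + x i 0 * dlN i 0 =
    - (l i 0 * x i 0 - sigma * mu).
  move=> i; have := congr1 (fun A : 'cV[R]_n => A i 0) E2; rewrite !mul_diag_mx !mxE.
  by rewrite mulr1.
have [hu hM] := hFp x l hball.
have dNE : col_mx dxN dlN = invmx (Fprime H x l) *m (- Fmu g (sigma * mu) x l).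
  by rewrite -hN mulmxA mulVmx // mul1mx.
have hFs : sq (Fmu g (sigma * mu) x l) <= (K0 * mu) ^+ 2.
  have hF2 := sq_le hF1.
  move: hF2; rewrite /Fmu !sq_col => hF2.
  have h3 : sq (hadam l x - (sigma * mu) *: const_mx 1) <=
      \sum_i (2 * (hadam l x - mu *: const_mx 1) i 0 ^+ 2 + 2 * mu ^+ 2).
    by apply: ler_sum => i _; rewrite !mxE !mulr1; apply: arith_sig.
  rewrite big_split /= -mulr_sumr sumr_const card_ord in h3.
  have hq : 0 <= sq (g x - l) := sq_ge0 _.
  have hK : 0 <= 2 * C1 ^+ 2 + 2 * n%:R.
    by apply: addr_ge0; apply: mulr_ge0; rewrite ?sqr_ge0 ?ler0n.
  rewrite exprMn sqr_sqrtr //.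
  exact: arith_F hF2 h3 hq.
have hdN : enorm (col_mx dxN dlN) <= K1 * mu.
  rewrite dNE; apply: le_trans (hM _) _.
  have hK0 : enorm (Fmu g (sigma * mu) x l) <= K0 * mu.
    apply: enorm_le => //; apply: mulr_ge0; [exact: sqrtr_ge0 | exact: ltW].
  rewrite (_ : enorm (- _) = enorm (Fmu g (sigma * mu) x l)); last first.
    by rewrite !enormE sq_opp.
  apply: le_trans (ler_wpM2r (enorm_ge0 _) (real_ler_norm (num_real M))) _.
  rewrite /K1 -mulrA; apply: ler_wpM2l => //; exact: normr_ge0.
have hdx : forall j, `|dxN j 0| <= K1 * mu.
  by move=> j; have := comp_le (col_mx dxN dlN) (lshift n j);
    rewrite col_mxEu => h; apply: le_trans h hdN.
have hdl : forall j, `|dlN j 0| <= K1 * mu.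
  by move=> j; have := comp_le (col_mx dxN dlN) (rshift n j);
    rewrite col_mxEd => h; apply: le_trans h hdN.
have hdxv : forall i, dx i 0 = if active xs i then
    (if s i then dxS g H (sigma * mu) x l i else dxC (sigma * mu) x l i) else 0.
  by move=> i; rewrite /dx /comb_dx mxE.
have hdlv : forall i, dl i 0 = if active xs i then 0 else dlC (sigma * mu) x l i.
  by move=> i; rewrite /dl /comb_dl mxE.
have C10 : 0 <= C1 by exact: ltW.
have nn0 : 0 <= (n%:R : R) by exact: ler0n.
have herr : forall i,
    `|(if active xs i then dxN i 0 - dx i 0 else dlN i 0 - dl i 0)| * c ^+ 2
      <= Kc * mu ^+ 2.
  move=> i; case: (boolP (active xs i)) => ha.
    rewrite hdxv ha.
    have hl2 := hlowA i ha.
    have x0 : 0 <= x i 0 := ltW (xp i).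
    have hxc : x i 0 * c <= 2 * (1 + C1) * mu by apply: arithXC (hFc i).
    case: (s i).
      set D := x i 0 * H x i i + l i 0.
      have hD : c / 4 <= D := arithD c0 hl2 (hHx i i) x0 hxc hmuS B0 C10 mu0.
      have D0 : D != 0.
        by apply: lt0r_neq0; apply: lt_le_trans hD; rewrite divr_gt0.
      have hSH : `|\sum_j H x i j * dxN j 0| <= n%:R * (B * (K1 * mu)).
        apply: le_trans (ler_norm_sum _ _ _) _.
        apply: le_trans (_ : \sum_(j < n) (B * (K1 * mu)) <= _).
          by apply: ler_sum => j _; rewrite normrM; apply: ler_pM; rewrite ?normr_ge0 ?hHx ?hdx.
        by rewrite sumr_const card_ord mulr_natl.
      have hDe := arithDe (erefl D) D0 (erefl _) (e1 i) (e2 i).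
      apply: le_trans (arithS c0 hD hDe x0 hxc (hHx i i) (hdx i) hSH mu0 C10 nn0) _.
      by apply: arithK_S => //; apply: addr_ge0 => //; exact: ler01.
    have hCe : l i 0 * (dxN i 0 - dxC (sigma * mu) x l i) = - (x i 0 * dlN i 0).
      apply: (arithCe (d := dxN i 0) _ _ (e2 i)); last by [].
      by apply: lt0r_neq0; exact: lp.
    apply: le_trans (arithC c0 hl2 x0 _ (hdl i) hCe mu0 C10) _.
      by rewrite mulrC; exact: hFc.
    by apply: arithK_C => //; apply: addr_ge0 => //; exact: ler01.
  rewrite hdlv (negbTE ha).
  have hx2 := hlowI i ha.
  have l0 : 0 <= l i 0 := ltW (lp i).
  have hCe : x i 0 * (dlN i 0 - dlC (sigma * mu) x l i) = - (l i 0 * dxN i 0).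
    have e2' : x i 0 * dlN i 0 + l i 0 * dxN i 0 = - (x i 0 * l i 0 - sigma * mu).
      by rewrite addrC (mulrC (x i 0) (l i 0)); exact: e2.
    apply: (arithCe _ _ e2') => //; apply: lt0r_neq0; exact: xp.
  apply: le_trans (arithC c0 hx2 l0 (hFc i) (hdx i) hCe mu0 C10) _.
  by apply: arithK_C => //; apply: addr_ge0 => //; exact: ler01.
have hdx0 : forall i, ~~ active xs i -> dx i 0 = 0.
  by move=> i ha; rewrite hdxv (negbTE ha).
have hdl0 : forall i, active xs i -> dl i 0 = 0.
  by move=> i ha; rewrite hdlv ha.
have hK : forall i,
    (if active xs i then dxN i 0 - dx i 0 else dlN i 0 - dl i 0) ^+ 2
      <= (K * mu ^+ 2) ^+ 2.
  move=> i; set E := (if _ then _ else _).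
  have h := herr i; rewrite -/E in h.
  have h' : `|E| <= K * mu ^+ 2.
    by rewrite /K mulrAC ler_pdivlMr ?exprn_gt0.
  rewrite -(real_normK (num_real E)) ler_pXn2r ?nnegrE ?normr_ge0 ?h' //.
  exact: le_trans (normr_ge0 _) h'.
clearbody dx dl.
set Ei := fun i => (if active xs i then dxN i 0 - dx i 0 else dlN i 0 - dl i 0) ^+ 2.
set Ai := fun i : 'I_n => if active xs i then dxN i 0 ^+ 2 else dlN i 0 ^+ 2.
set Wi := fun i : 'I_n => if active xs i then dlN i 0 ^+ 2 else dxN i 0 ^+ 2.
rewrite !enormE ler_sqrt ?sq_ge0 // !sq_col_diff -!big_split /=.
have -> : \sum_i (((x + dxN) i 0 - (x + dx) i 0) ^+ 2 + ((l + dlN) i 0 - (l + dl) i 0) ^+ 2)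
    = \sum_i Ei i + \sum_i Wi i.
  rewrite -big_split; apply: eq_bigr => i _ /=; rewrite /Ei /Wi !mxE.
  case: (boolP (active xs i)) => ha.
    by rewrite (hdl0 i ha); ring.
  by rewrite (hdx0 i ha); ring.
have -> : \sum_i (((x + dxN) i 0 - x i 0) ^+ 2 + ((l + dlN) i 0 - l i 0) ^+ 2)
    = \sum_i Ai i + \sum_i Wi i.
  rewrite -big_split; apply: eq_bigr => i _ /=; rewrite /Ai /Wi !mxE.
  case: (boolP (active xs i)) => ha.
    by ring.
  by ring.
apply: lerD => //.
have hA2 : \sum_i Ai i = \sum_(i | active xs i) dxN i 0 ^+ 2
                        + \sum_(i | ~~ active xs i) dlN i 0 ^+ 2.
  rewrite /Ai (bigID (fun i => active xs i)) /=; congr (_ + _).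
    by apply: eq_bigr => i ->.
  by apply: eq_bigr => i /negbTE ->.
have hAIs : (C8 * mu `^ gamma) ^+ 2 <= \sum_i Ai i.
  rewrite hA2.
  have hS : 0 <= \sum_(i | active xs i) dxN i 0 ^+ 2
                 + \sum_(i | ~~ active xs i) dlN i 0 ^+ 2.
    by apply: addr_ge0; apply: sumr_ge0 => i _; exact: sqr_ge0.
  have hC8p : 0 <= C8 * mu `^ gamma.
    by apply: mulr_ge0; [exact: ltW | exact: powR_ge0].
  rewrite -(sqr_sqrtr hS) ler_pXn2r ?nnegrE ?sqrtr_ge0 ?hC8p //.
apply: le_trans hAIs.
apply: le_trans (_ : \sum_(i < n) (K * mu ^+ 2) ^+ 2 <= _).
  by apply: ler_sum => i _; exact: hK.
rewrite sumr_const card_ord -mulr_natl.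
have hq : mu ^+ 2 <= sv * mu `^ gamma.
  rewrite (mu2E gamma mu0) mulrC; apply: ler_wpM2r => //; exact: powR_ge0.
exact: (arithFin (sqr_ge0 _) hq (powR_ge0 _ _) (erefl _) nK0 hC8).
Qed.
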